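(* Let $\mathbb{Z}\langle w_1,w_2,\ldots\rangle$ be the free associative algebra over $\mathbb{Z}$ on generators $w_n$ of degree $2n$, with the graded Hopf algebra structure given by $\Delta w_n=\sum_{k=0}^n\binom{n}{k}w_k\otimes w_{n-k}$ (where $w_0=1$), and let $\mathbb{Z}\langle \xi_1,\xi_2,\ldots\rangle$ be the free associative algebra over $\mathbb{Z}$ on generators $\xi_n$ of degree $2n$, with the graded Hopf algebra structure given by $\Delta\xi_n=1\otimes\xi_n+\xi_n\otimes1$. Then these two graded Hopf algebras are isomorphic over $\mathbb{Z}$. *)

(* Defs.v *)
From HB Require Import structures.
From mathcomp Require Import all_boot all_algebra.
From mathcomp Require Import finmap monalg.
Set Implicit Arguments. Unset Strict Implicit. Unset Printing Implicit Defensive.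
Import GRing.Theory.
Local Open Scope ring_scope.

(* Product of two monoids (componentwise), used to build the tensor square:
   Z[M1] (x) Z[M2] = Z[M1 x M2] as rings. *)
Definition mprod (M1 M2 : monomType) := (M1 * M2)%type.
HB.instance Definition _ (M1 M2 : monomType) := Choice.on (mprod M1 M2).

Section MProd.
Variables M1 M2 : monomType.
Definition mprod_one : mprod M1 M2 := (mone, mone).
Definition mprod_mul (x y : mprod M1 M2) : mprod M1 M2 :=
  (mmul x.1 y.1, mmul x.2 y.2).
Lemma mprod_mulA : associative mprod_mul.
Proof. by move=> [a b] [c d] [e f]; rewrite /mprod_mul /= !mulmA. Qed.
Lemma mprod_mul1m : left_id mprod_one mprod_mul.
Proof. by move=> [a b]; rewrite /mprod_mul /= !mul1m. Qed.
Lemma mprod_mulm1 : right_id mprod_one mprod_mul.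
Proof. by move=> [a b]; rewrite /mprod_mul /= !mulm1. Qed.
Lemma mprod_unitm (x y : mprod M1 M2) :
  mprod_mul x y = mprod_one -> x = mprod_one /\ y = mprod_one.
Proof.
case: x y => [a b] [c d]; rewrite /mprod_mul /mprod_one => -[].
by move=> /unitm[-> ->] /unitm[-> ->].
Qed.
HB.instance Definition _ := Choice_isMonomialDef.Build (mprod M1 M2)
  mprod_mulA mprod_mul1m mprod_mulm1 mprod_unitm.
End MProd.

(* Words in the letters 0,1,2,...; letter i stands for the generator of
   index i+1 (w_{i+1}, resp. xi_{i+1}). *)
Definition word := {fmonom nat}.

Definition FA := {malg int[word]}.
(* Its tensor square FA (x)_Z FA, as the monoid ring of word x word. *)
Definition FA2 := {malg int[mprod word word]}.

Definition X (i : nat) : FA := << fmu i >>.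

Definition tens (a b : FA) : FA2 :=
  \sum_(i <- msupp a) \sum_(j <- msupp b)
     << a@_i * b@_j *g ((i, j) : mprod word word) >>.

Definition tmap (f g : FA -> FA) (t : FA2) : FA2 :=
  \sum_(k <- msupp t) t@_k *: tens (f << k.1 >>) (g << k.2 >>).

Definition extw (h : nat -> FA2) (m : word) : FA2 :=
  \prod_(i <- fmonom_val m) h i.
Definition algext (h : nat -> FA2) (x : FA) : FA2 :=
  \sum_(k <- msupp x) x@_k *: extw h k.

Definition wgen (n : nat) : FA := if n is m.+1 then X m else 1.

Definition Dw_gen (i : nat) : FA2 :=
  \sum_(k < i.+2) ('C(i.+1, k))%:R * tens (wgen k) (wgen (i.+1 - k)).
Definition Dxi_gen (i : nat) : FA2 := tens 1 (X i) + tens (X i) 1.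

Definition DeltaW : FA -> FA2 := algext Dw_gen.
Definition DeltaXi : FA -> FA2 := algext Dxi_gen.

(* counit (the same for both): the constant coefficient *)
Definition eps (x : FA) : int := x@_(fmone nat).

Definition wt (m : word) : nat := \sum_(i <- fmonom_val m) (2 * i.+1)%N.
Definition homog (d : nat) (x : FA) : Prop :=
  forall m, m \in msupp x -> wt m = d.

(* Main.v *)
Set Warnings "-notation-overridden -ambiguous-paths -notation-incompatible-prefix".
Require Import Defs.
From HB Require Import structures.
From mathcomp Require Import all_boot all_algebra.
From mathcomp Require Import finmap monalg.
From mathcomp Require Import ring zify.
Import GRing.Theory.
Local Open Scope ring_scope.
Set Implicit Arguments. Unset Strict Implicit. Unset Printing Implicit Defensive.

Definition addP {U V : zmodType} (f : U -> V) := forall x y, f (x + y) = f x + f y.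

Lemma addP0 (U V : zmodType) (f : U -> V) : addP f -> f 0 = 0.
Proof. by move=> H; apply/(@addrI _ (f 0)); rewrite -H !addr0. Qed.

Lemma addPN (U V : zmodType) (f : U -> V) : addP f -> forall x, f (- x) = - f x.
Proof.
move=> H x; apply/(@addrI _ (f x)); rewrite -H !subrr; exact: addP0.
Qed.

Lemma addPMn (U V : zmodType) (f : U -> V) : addP f -> forall x n, f (x *+ n) = f x *+ n.
Proof.
move=> H x; elim=> [|n IH]; first by rewrite !mulr0n (addP0 H).
by rewrite !mulrS H IH.
Qed.

Lemma addPMz (U V : zmodType) (f : U -> V) : addP f -> forall x c, f (x *~ c) = f x *~ c.
Proof.
move=> H x [n|n]; first by rewrite -!pmulrn (addPMn H).
by rewrite !NegzE !mulrNz -!pmulrn (addPN H) (addPMn H).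
Qed.

Lemma addP_sum (U V : zmodType) (f : U -> V) (I : Type) (s : seq I) (F : I -> U) :
  addP f -> f (\sum_(i <- s) F i) = \sum_(i <- s) f (F i).
Proof. by move=> H; apply: (big_morph f H (addP0 H)). Qed.

Section Ext.
Context {K : choiceType} {T : zmodType}.

Lemma ext_eq (phi psi : {malg int[K]} -> T) : addP phi -> addP psi ->
  (forall c k, phi << c *g k >> = psi << c *g k >>) -> forall x, phi x = psi x.
Proof.
move=> Hp Hq E x; rewrite (monalgE x) (addP_sum _ _ Hp) (addP_sum _ _ Hq).
by apply: eq_bigr => k _; apply: E.
Qed.

Lemma monU_z (c : int) (k : K) : << c *g k >> = << k >> *~ c :> {malg int[K]}.
Proof. by rewrite -raddfMz intz. Qed.

Lemma scale_int (x : {malg int[K]}) c : c *: x = x *~ c.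
Proof. by rewrite -[in LHS](intz c) scaler_int. Qed.
End Ext.

Section Lext.
Context {K : monomType} {T : nzRingType}.

Definition lext (h : K -> T) (x : {malg int[K]}) : T := mmap ( *~%R (1:T)) h x.

Lemma lextD h : addP (lext h).
Proof. by move=> x y; rewrite /lext mmapD. Qed.

Lemma lextU h c k : lext h << c *g k >> = h k *~ c.
Proof. by rewrite /lext mmapU mulrzAl mul1r. Qed.

Lemma lextE h x : lext h x = \sum_(k <- msupp x) h k *~ x@_k.
Proof. by rewrite /lext mmapE; apply: eq_bigr => k _; rewrite mulrzAl mul1r. Qed.

Lemma lext_addh h1 h2 x : lext (fun k => h1 k + h2 k) x = lext h1 x + lext h2 x.
Proof. by rewrite !lextE -big_split; apply: eq_bigr => k _; rewrite mulrzDl. Qed.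

Lemma lext_mul (h : K -> T) : h mone = 1 -> (forall a b, h (mmul a b) = h a * h b) ->
  (forall x y, lext h (x * y) = lext h x * lext h y) /\ lext h 1 = 1.
Proof.
move=> h1 hM; split; last by rewrite -[1 : {malg int[K]}]/(<< (mone : K) >>) lextU h1.
move=> x y; move: x; apply: ext_eq.
- by move=> a b; rewrite mulrDl lextD.
- by move=> a b; rewrite lextD mulrDl.
move=> c k; move: y; apply: ext_eq.
- by move=> a b; rewrite mulrDr lextD.
- by move=> a b; rewrite lextD mulrDr.
move=> d l; rewrite malgM_def fgmulUU !lextU hM.
by rewrite mulrzAl mulrzAr -mulrzA mulrC.
Qed.
End Lext.
Definition rmor {T : nzRingType} (phi : FA -> T) :=
  [/\ addP phi, (forall x y, phi (x * y) = phi x * phi y) & phi 1 = 1].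

Definition ext' {T : nzRingType} (g : nat -> T) (m : word) : T :=
  \prod_(i <- fmonom_val m) g i.

Lemma wordM (a b : word) : fmonom_val (mmul a b) = fmonom_val a ++ fmonom_val b.
Proof. exact: fmM. Qed.

Lemma word1 : fmonom_val (mone : word) = [::].
Proof. exact: fm1. Qed.

Lemma ext'_mul {T : nzRingType} (g : nat -> T) :
  ext' g mone = 1 /\ forall a b, ext' g (mmul a b) = ext' g a * ext' g b.
Proof.
split; first by rewrite /ext' word1 big_nil.
by move=> a b; rewrite /ext' wordM big_cat.
Qed.

Lemma lext_rmor {T : nzRingType} (g : nat -> T) : rmor (lext (ext' g) : FA -> T).
Proof.
have [h1 hM] := ext'_mul g.
have [M O] := lext_mul h1 hM.
by split=> //; apply: lextD.
Qed.

Lemma lextX {T : nzRingType} (g : nat -> T) i : lext (ext' g) (X i) = g i.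
Proof. by rewrite /X lextU /ext' fmU big_seq1. Qed.

Lemma monX (k : word) : << k >> = \prod_(i <- fmonom_val k) X i :> FA.
Proof.
case: k => s; elim: s => [|i s IH].
  by rewrite big_nil -fm1 fmK.
have -> : FMonom (i :: s) = mmul (fmu i) (FMonom s).
  by apply: val_inj; rewrite /= wordM fmU.
by rewrite wordM fmU /= big_cons -IH malgM_def fgmulUU mulr1.
Qed.

Lemma rmorMz {T : nzRingType} (phi : FA -> T) : rmor phi ->
  forall c k, phi << c *g k >> = (\prod_(i <- fmonom_val k) phi (X i)) *~ c.
Proof.
move=> [A M O] c k; rewrite monU_z (addPMz A) monX; congr (_ *~ _).
elim: (fmonom_val k) => [|i s IH]; first by rewrite !big_nil.
by rewrite !big_cons M IH.
Qed.

Lemma rmor_eq {T : nzRingType} (phi psi : FA -> T) : rmor phi -> rmor psi ->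
  (forall i, phi (X i) = psi (X i)) -> forall x, phi x = psi x.
Proof.
move=> Hp Hq E; apply: ext_eq; [by case: Hp|by case: Hq|] => c k.
by rewrite (rmorMz Hp) (rmorMz Hq); congr (_ *~ _); apply: eq_bigr.
Qed.

Lemma rmor_comp {T : nzRingType} (phi : FA -> FA) (psi : FA -> T) :
  rmor phi -> rmor psi -> rmor (fun x => psi (phi x)).
Proof.
move=> [A M O] [A' M' O']; split; last by rewrite O O'.
  by move=> x y; rewrite A A'.
by move=> x y; rewrite M M'.
Qed.

Lemma rmor_nat {T : nzRingType} (phi : FA -> T) : rmor phi -> forall n, phi n%:R = n%:R.
Proof. by move=> [A M O] n; rewrite (addPMn A) O. Qed.

Lemma rmor_sum {T : nzRingType} (phi : FA -> T) I (s : seq I) F : rmor phi ->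
  phi (\sum_(i <- s) F i) = \sum_(i <- s) phi (F i).
Proof. by move=> [A _ _]; apply: addP_sum. Qed.
Notation P2 := (mprod word word).

Lemma tensE (a b : FA) :
  tens a b = lext (fun i => lext (fun j => << ((i, j) : P2) >> : FA2) b) a.
Proof.
rewrite /tens lextE; apply: eq_bigr => i _; rewrite lextE mulrz_suml.
apply: eq_bigr => j _.
by rewrite (monU_z (a@_i * b@_j)) -mulrzA [(a@_i * _)]mulrC.
Qed.


Lemma tensDl (b : FA) : addP (fun a => tens a b).
Proof. move=> x y. rewrite !tensE. rewrite lextD. done. Qed.
Lemma lext_ext {K : monomType} {T : nzRingType} (h1 h2 : K -> T) x :
  (forall k, h1 k = h2 k) -> lext h1 x = lext h2 x.
Proof. by move=> E; rewrite !lextE; apply: eq_bigr => k _; rewrite E. Qed.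

Lemma tensDr (a : FA) : addP (fun b => tens a b).
Proof.
move=> x y; rewrite !tensE -lext_addh; apply: lext_ext => i.
by rewrite lextD.
Qed.
Lemma tensU c d i j : tens << c *g i >> << d *g j >> = << ((i, j) : P2) >> *~ (c * d).
Proof. rewrite tensE !lextU. rewrite -mulrzA. by rewrite [(d * c)]mulrC. Qed.
Lemma mprodM (i1 i2 i3 i4 : word) :
  mmul ((i1, i2) : P2) ((i3, i4) : P2) = ((mmul i1 i3, mmul i2 i4) : P2).
Proof. rewrite /mmul /=. rewrite /mprod_mul /=. done. Qed.

Lemma tensM (a b c d : FA) : tens a b * tens c d = tens (a * c) (b * d).
Proof.
move: a; apply: ext_eq.
- by move=> x y; rewrite tensDl mulrDl.
- by move=> x y; rewrite mulrDl tensDl.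
move=> c1 k1; move: b; apply: ext_eq.
- by move=> x y; rewrite tensDr mulrDl.
- by move=> x y; rewrite mulrDl tensDr.
move=> c2 k2; move: c; apply: ext_eq.
- by move=> x y; rewrite tensDl mulrDr.
- by move=> x y; rewrite mulrDr tensDl.
move=> c3 k3; move: d; apply: ext_eq.
- by move=> x y; rewrite tensDr mulrDr.
- by move=> x y; rewrite mulrDr tensDr.
move=> c4 k4.
rewrite !tensU mulrzAl mulrzAr -mulrzA !malgM_def !fgmulUU mul1r tensU mprodM.
congr (_ *~ _).
by rewrite mulrC mulrACA.
Qed.

Lemma tens11 : tens 1 1 = 1.
Proof.
by rewrite -[1 : FA]/(<< (mone : word) >>) tensU mulr1z.
Qed.
Lemma binA n i j : (j + i <= n)%N ->
  ('C(n, j + i) * 'C(j + i, i) = 'C(n, i) * 'C(n - i, j))%N.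
Proof.
move=> H.
have Hi : (i <= n)%N by lia.
have Hj : (j <= n - i)%N by lia.
have e1 := bin_fact (leq_addl j i); rewrite addnK in e1.
have e2 := bin_fact H.
have e3 := bin_fact Hj.
have e4 := bin_fact Hi.
have F : (n - i - j = n - (j + i))%N by lia.
rewrite F in e3.
apply/eqP; rewrite -(eqn_pmul2r (_ : 0 < i`! * j`! * (n - (j + i))`!)%N); last first.
  by rewrite !muln_gt0 !fact_gt0.
have -> : ('C(n, j + i) * 'C(j + i, i) * (i`! * j`! * (n - (j + i))`!) =
   'C(n, j + i) * ('C(j + i, i) * (i`! * j`!)) * (n - (j + i))`!)%N by ring.
have -> : ('C(n, i) * 'C(n - i, j) * (i`! * j`! * (n - (j + i))`!) =
   'C(n, i) * i`! * ('C(n - i, j) * (j`! * (n - (j + i))`!)))%N by ring.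
by rewrite e1 e3 -mulnA e2 -mulnA e4.
Qed.

Section Hurwitz.
Context {R : nzRingType}.
Implicit Types a b c : nat -> R.

Definition hp a b n : R := \sum_(0 <= k < n.+1) 'C(n, k)%:R * (a k * b (n - k)%N).

Lemma hp_eq a a' b b' n : (forall k, (k <= n)%N -> a k = a' k) ->
  (forall k, (k <= n)%N -> b k = b' k) -> hp a b n = hp a' b' n.
Proof.
move=> Ea Eb; apply: eq_big_nat => k /andP[_ Hk].
by rewrite Ea // Eb // leq_subr.
Qed.

Lemma hpDr a b c n : hp a (fun k => b k + c k) n = hp a b n + hp a c n.
Proof. by rewrite /hp -big_split; apply: eq_bigr => k _; rewrite mulrDr mulrDr. Qed.

Lemma hp_pascal a b n :
  hp a b n.+1 = hp (fun k => a k.+1) b n + hp a (fun k => b k.+1) n.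
Proof.
rewrite /hp big_nat_recl // bin0 subn0.
have E : \sum_(0 <= k < n.+1) 'C(n.+1, k.+1)%:R * (a k.+1 * b (n.+1 - k.+1)%N)
   = \sum_(0 <= k < n.+1) 'C(n, k)%:R * (a k.+1 * b (n - k)%N)
   + \sum_(0 <= k < n.+1) 'C(n, k.+1)%:R * (a k.+1 * b (n - k)%N).
  rewrite -big_split; apply: eq_bigr => k _; by rewrite binS natrD mulrDl subSS addrC.
rewrite E addrCA; congr (_ + _).
rewrite [in RHS]big_nat_recl // bin0 subn0 mul1r; congr (_ + _).
rewrite big_nat_recr //= bin_small // mul0r addr0.
apply: eq_big_nat => k /andP[_ Hk].
by rewrite subnSK.
Qed.

Lemma hp_comm a b n : (forall i j, a i * b j = b j * a i) -> hp a b n = hp b a n.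
Proof.
move=> C; rewrite /hp big_nat_rev /=; apply: eq_big_nat => k /andP[_ Hk].
rewrite ltnS in Hk.
rewrite add0n subSS bin_sub // subKn //; congr (_ * _).
exact: C.
Qed.

Lemma hp_assoc a b c n :
  hp (fun k => hp a b k) c n = hp a (fun k => hp b c k) n.
Proof.
rewrite /hp.
have E1 : forall k, (k < n.+1)%N ->
   'C(n, k)%:R * ((\sum_(0 <= i < k.+1) 'C(k, i)%:R * (a i * b (k - i)%N)) * c (n - k)%N)
   = \sum_(0 <= i < n.+1) ('C(n, k) * 'C(k, i))%:R * (a i * b (k - i)%N * c (n - k)%N) :> R.
  move=> k Hk; rewrite big_distrl big_distrr /=.
  rewrite (big_cat_nat _ (n := k.+1) (p := n.+1)) //= [X in _ = _ + X]big1_seq ?addr0.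
    by apply: eq_bigr => i _; rewrite natrM !mulrA.
  move=> i /andP[_]; rewrite mem_index_iota => /andP[Hi _].
  by rewrite (bin_small Hi) muln0 mul0r.
rewrite (eq_big_nat _ _ (fun k (Hk : (0 <= k < n.+1)%N) => E1 k (proj2 (andP Hk)))) exchange_big_nat /=.
apply: eq_big_nat => i /andP[_ Hi]; rewrite ltnS in Hi.
rewrite big_distrr big_distrr /=.
rewrite (big_cat_nat _ (n := i) (p := n.+1)) //=; last by rewrite leqW.
rewrite [X in X + _]big1_seq ?add0r; last first.
  move=> k /andP[_]; rewrite mem_index_iota => /andP[_ Hk].
  by rewrite (bin_small Hk) muln0 mul0r.
rewrite -{1}[i]add0n big_addn subSn //.
apply: eq_big_nat => j /andP[_ Hj].
have Hji : (j + i <= n)%N by lia.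
rewrite addnK binA // natrM.
have -> : (n - (j + i) = n - i - j)%N by lia.
rewrite -!mulrA; congr (_ * _); by rewrite [RHS]mulrA (commr_nat (a i)) -mulrA.
Qed.

End Hurwitz.

Lemma algextE h x : algext h x = lext (ext' h) x.
Proof. by rewrite /algext lextE; apply: eq_bigr => k _; rewrite scale_int. Qed.

Lemma tmapE f g t :
  tmap f g t = lext (fun k : P2 => tens (f << k.1 >>) (g << k.2 >>)) t.
Proof. by rewrite /tmap lextE; apply: eq_bigr => k _; rewrite scale_int. Qed.

Lemma rmor_algext h : rmor (algext h).
Proof.
have [A M O] := lext_rmor h; split.
- by move=> x y; rewrite !algextE A.
- by move=> x y; rewrite !algextE M.
- by rewrite algextE O.
Qed.

Lemma algextX h i : algext h (X i) = h i.
Proof. by rewrite algextE lextX. Qed.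

Lemma rmorLT : rmor (fun y => tens y 1).
Proof.
split; first exact: tensDl.
  by move=> x y; rewrite tensM mulr1.
exact: tens11.
Qed.

Lemma rmorRT : rmor (fun y => tens 1 y).
Proof.
split; first exact: tensDr.
  by move=> x y; rewrite tensM mulr1.
exact: tens11.
Qed.

Lemma monM (a b : word) : << mmul a b >> = << a >> * << b >> :> FA.
Proof. by rewrite malgM_def fgmulUU mulr1. Qed.

Lemma fmonM (f : FA -> FA) : rmor f -> forall a b : word, f << mmul a b >> = f << a >> * f << b >>.
Proof. by move=> [_ fM _] a b; rewrite monM; apply: fM. Qed.

Lemma tens_fmon f : rmor f -> forall a1 b1 a2 b2 : word,
 tens (f << mmul a1 b1 >>) (f << mmul a2 b2 >>) =
     tens (f << a1 >>) (f << a2 >>) * tens (f << b1 >>) (f << b2 >>).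
Proof.
move=> Hf a1 b1 a2 b2.
rewrite tensM.
exact: (f_equal2 tens (fmonM Hf a1 b1) (fmonM Hf a2 b2)).
Qed.

Lemma tmap_props f : rmor f ->
  [/\ addP (tmap f f), (forall s t, tmap f f (s * t) = tmap f f s * tmap f f t)
    & tmap f f 1 = 1].
Proof.
move=> Hf; have [fA fM fO] := Hf.
have h1 : (fun k : P2 => tens (f << k.1 >>) (f << k.2 >>)) mone = 1.
  change (tens (f << (mone : word) >>) (f << (mone : word) >>) = 1).
  by rewrite -[<< (mone : word) >>]/(1 : FA) fO tens11.
have hM : forall a b : P2,
   (fun k : P2 => tens (f << k.1 >>) (f << k.2 >>)) (mmul a b) =
   (fun k : P2 => tens (f << k.1 >>) (f << k.2 >>)) a *
   (fun k : P2 => tens (f << k.1 >>) (f << k.2 >>)) b.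
  move=> [a1 a2] [b1 b2]; rewrite mprodM; exact: tens_fmon Hf a1 b1 a2 b2.
have [M O] := lext_mul h1 hM.
split.
- by move=> x y; rewrite !tmapE lextD.
- by move=> x y; rewrite !tmapE M.
- by rewrite tmapE O.
Qed.
Lemma fU (f : FA -> FA) c k : rmor f -> f << c *g k >> = f << k >> *~ c.
Proof. by move=> [fA _ _]; rewrite monU_z; apply: (addPMz fA). Qed.

Lemma tens_fU f c d i j : rmor f ->
  tens (f << c *g i >>) (f << d *g j >>) = tens (f << i >>) (f << j >>) *~ (c * d).
Proof.
move=> Hf; rewrite (f_equal2 tens (fU c i Hf) (fU d j Hf)).
by rewrite (addPMz (tensDl _)) (addPMz (tensDr _)) -mulrzA [(d * c)]mulrC.
Qed.

Lemma tmap_tens f a b : rmor f -> tmap f f (tens a b) = tens (f a) (f b).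
Proof.
move=> Hf; have [tA tM tO] := tmap_props Hf; have [fA fM fO] := Hf.
move: a; apply: ext_eq.
- by move=> x y; rewrite tensDl tA.
- by move=> x y; rewrite fA tensDl.
move=> c i; move: b; apply: ext_eq.
- by move=> x y; rewrite tensDr tA.
- by move=> x y; rewrite fA tensDr.
move=> d j; rewrite tensU (addPMz tA) tmapE lextU /= (tens_fU _ _ _ _ Hf).
by rewrite mulr1z.
Qed.
Section Srec.
Context {T : Type} (d : T) (step : nat -> (nat -> T) -> T).
Fixpoint srec_seq n : seq T :=
  if n is m.+1 then rcons (srec_seq m) (step m (nth d (srec_seq m))) else [::].
Definition srec n := nth d (srec_seq n.+1) n.
Lemma size_srec n : size (srec_seq n) = n.
Proof. by elim: n => //= n IH; rewrite size_rcons IH. Qed.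
Lemma nth_srec n k : (k < n)%N -> nth d (srec_seq n) k = srec k.
Proof.
elim: n => [//|n IH] Hk; rewrite /= nth_rcons size_srec.
case: (ltngtP k n) => [lt|gt|->]; first exact: IH.
  by rewrite ltnS leqNgt gt in Hk.
by rewrite /srec /= nth_rcons size_srec ltnn eqxx.
Qed.
Hypothesis loc : forall n p q, (forall k, (k < n)%N -> p k = q k) -> step n p = step n q.
Lemma srecE n : srec n = step n srec.
Proof.
rewrite /srec /= nth_rcons size_srec ltnn eqxx; apply: loc => k Hk.
exact: nth_srec.
Qed.
End Srec.

Lemma rmor_hp {T : nzRingType} (phi : FA -> T) a b n : rmor phi ->
  phi (hp a b n) = hp (fun k => phi (a k)) (fun k => phi (b k)) n.
Proof.
move=> Hp; have [A M O] := Hp. rewrite /hp rmor_sum //. apply: eq_bigr => k _.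
by rewrite M M (rmor_nat Hp).
Qed.

Definition Gstep (n : nat) (p : nat -> FA) : FA := if n is m.+1 then hp p X m else 1.
Definition Gdef := srec 0 Gstep.
Fact G_key : unit. Proof. by []. Qed.
Definition G := locked_with G_key Gdef.
Lemma G_unlock : G = Gdef.
Proof. exact: locked_withE. Qed.

Lemma G0 : G 0 = 1.
Proof. by rewrite G_unlock. Qed.

Lemma Gloc n p q : (forall k, (k < n)%N -> p k = q k) -> Gstep n p = Gstep n q.
Proof.
case: n => [//|n] E; rewrite /Gstep; apply: hp_eq => k Hk //.
by apply: E; rewrite ltnS.
Qed.

Lemma GS m : G m.+1 = hp G X m.
Proof. rewrite G_unlock; exact: (@srecE FA 0 Gstep Gloc m.+1). Qed.
Definition fgen (i : nat) : FA := G i.+1.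
Fact f_key : unit. Proof. by []. Qed.
Definition fmap : FA -> FA := locked_with f_key (lext (ext' fgen)).
Lemma fmapE : fmap = lext (ext' fgen).
Proof. exact: locked_withE. Qed.

Lemma rmor_f : rmor fmap.
Proof. rewrite fmapE; exact: lext_rmor. Qed.

Lemma fX i : fmap (X i) = G i.+1.
Proof. rewrite fmapE; exact: lextX. Qed.

Lemma fw k : fmap (wgen k) = G k.
Proof. by case: k => [|k]; [rewrite G0; have [_ _ ->] := rmor_f | exact: fX]. Qed.

Definition Aw k := tens (G k) 1.
Definition Bw k := tens 1 (G k).
Definition PP j := tens (X j) 1.
Definition QQ j := tens 1 (X j).

Lemma EA k : Aw k.+1 = hp Aw PP k.
Proof. rewrite /Aw GS. exact: (rmor_hp G X k rmorLT). Qed.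

Lemma EB k : Bw k.+1 = hp Bw QQ k.
Proof. rewrite /Bw GS; exact: (rmor_hp G X k rmorRT). Qed.

Lemma PBcomm i j : PP i * Bw j = Bw j * PP i.
Proof. rewrite /PP /Bw. rewrite [LHS]tensM. rewrite [RHS]tensM. by rewrite !mulr1 !mul1r. Qed.

Lemma rmorDXi : rmor DeltaXi.
Proof. exact: rmor_algext. Qed.

Lemma DeltaG n : DeltaXi (G n) = hp Aw Bw n.
Proof.
elim/ltn_ind: n => n IH.
case: n IH => [|m] IH.
  have [_ _ D1] := rmorDXi.
  rewrite G0 D1 /hp big_nat1 bin0 /Aw /Bw G0.
  by rewrite tens11 !mulr1.
rewrite [in X in X = _]GS. rewrite [LHS](rmor_hp G X m rmorDXi).
rewrite [LHS](_ : _ = hp (fun k => hp Aw Bw k) (fun k => QQ k + PP k) m); last first.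
  apply: hp_eq => k Hk; first by apply: IH; rewrite ltnS.
  by rewrite /DeltaXi algextX.
rewrite [LHS]hpDr. rewrite [RHS]hp_pascal. rewrite [RHS]addrC.
apply: (f_equal2 (@GRing.add _)).
  rewrite [LHS]hp_assoc. apply: hp_eq => k _; first by []. exact: esym (EB k).
apply: (@etrans _ _ (hp Aw (fun k => hp PP Bw k) m)).
  rewrite [LHS]hp_assoc. apply: hp_eq => k _; first by []. apply: hp_comm => i j.
  exact: esym (PBcomm j i).
rewrite -[LHS]hp_assoc. apply: hp_eq => k _; last by []. exact: esym (EA k).
Qed.

Lemma tmap_nat f n : rmor f -> tmap f f n%:R = n%:R.
Proof. by move=> Hf; have [tA _ tO] := tmap_props Hf; rewrite (addPMn tA) tO. Qed.

Lemma rmorDW : rmor DeltaW.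
Proof. exact: rmor_algext. Qed.

Lemma Dgen i : DeltaXi (fmap (X i)) = tmap fmap fmap (DeltaW (X i)).
Proof.
have Hf := rmor_f; have [tA tM tO] := tmap_props Hf.
rewrite fX DeltaG /DeltaW algextX /Dw_gen.
rewrite (addP_sum _ _ tA).
rewrite /hp big_mkord.
apply: eq_bigr => k _.
rewrite [RHS]tM. rewrite (tmap_nat _ Hf). rewrite (tmap_tens _ _ Hf).
rewrite !fw /Aw /Bw. by rewrite tensM mulr1 mul1r.
Qed.

Lemma Dcompat x : DeltaXi (fmap x) = tmap fmap fmap (DeltaW x).
Proof.
have Hf := rmor_f; have [tA tM tO] := tmap_props Hf; have [wA wM wO] := rmorDW.
apply: (rmor_eq (phi := fun x => DeltaXi (fmap x)) (psi := fun x => tmap fmap fmap (DeltaW x))).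
- exact: rmor_comp Hf rmorDXi.
- split.
  + by move=> a b; rewrite wA tA.
  + by move=> a b; rewrite wM tM.
  + by rewrite wO tO.
- exact: Dgen.
Qed.

Lemma addPB (U V : zmodType) (f : U -> V) : addP f -> forall x y, f (x - y) = f x - f y.
Proof. by move=> H x y; rewrite H (addPN H). Qed.

Definition rstep (n : nat) (p : nat -> FA) : FA :=
  X n - \sum_(0 <= k < n) 'C(n, k.+1)%:R * (wgen k.+1 * p (n - k.+1)%N).

Lemma rloc n p q : (forall k, (k < n)%N -> p k = q k) -> rstep n p = rstep n q.
Proof.
move=> E; rewrite /rstep. apply: f_equal. apply: f_equal. apply: eq_big_nat => k /andP[_ Hk].
rewrite E //; lia.
Qed.

Definition rdef := srec 0 rstep.
Fact r_key : unit. Proof. by []. Qed.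
Definition r := locked_with r_key rdef.

Lemma rE n : r n = X n - \sum_(0 <= k < n) 'C(n, k.+1)%:R * (wgen k.+1 * r (n - k.+1)%N).
Proof.
have -> : r = rdef by exact: locked_withE.
exact: (@srecE FA 0 rstep rloc n).
Qed.

Fact h_key : unit. Proof. by []. Qed.
Definition hinv : FA -> FA := locked_with h_key (lext (ext' r)).
Lemma hinvE : hinv = lext (ext' r).
Proof. exact: locked_withE. Qed.

Lemma rmor_h : rmor hinv.
Proof. rewrite hinvE; exact: lext_rmor. Qed.

Lemma hX i : hinv (X i) = r i.
Proof. rewrite hinvE; exact: lextX. Qed.

Lemma f_r n : fmap (r n) = X n.
Proof.
elim/ltn_ind: n => n IH.
have [fA fM fO] := rmor_f.
rewrite rE (addPB fA) fX (addP_sum _ _ fA).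
rewrite (eq_big_nat _ _ (F2 := fun k => 'C(n, k.+1)%:R * (G k.+1 * X (n - k.+1)%N))); last first.
  move=> k /andP[_ Hk].
  rewrite fM (rmor_nat rmor_f) fM fw IH //.
  by lia.
rewrite GS /hp big_nat_recl // bin0 G0 subn0 mulr1n mul1r.
by rewrite mul1r addrK.
Qed.

Lemma h_G n : hinv (G n) = wgen n.
Proof.
elim/ltn_ind: n => n IH.
have Hh := rmor_h; have [hA hM hO] := Hh.
case: n IH => [|m] IH; first by rewrite G0 hO.
rewrite GS (rmor_hp G X m Hh).
rewrite (hp_eq (a' := wgen) (b' := r)); last first.
- by move=> k _; rewrite hX.
- by move=> k Hk; apply: IH; rewrite ltnS.
rewrite /hp big_nat_recl // bin0 subn0 mulr1n mul1r mul1r.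
by rewrite [X in X + _]rE subrK.
Qed.

Lemma rmor_id : rmor (fun x : FA => x).
Proof. by []. Qed.

Lemma bij_f : bijective fmap.
Proof.
exists hinv.
- move=> x; apply: (rmor_eq (phi := fun x => hinv (fmap x)) (psi := fun x => x)) => //.
    exact: rmor_comp rmor_f rmor_h.
  by move=> i; rewrite fX h_G.
- move=> x; apply: (rmor_eq (phi := fun x => fmap (hinv x)) (psi := fun x => x)) => //.
    exact: rmor_comp rmor_h rmor_f.
  by move=> i; rewrite hX f_r.
Qed.

Lemma wtM (a b : word) : wt (mmul a b) = (wt a + wt b)%N.
Proof. by rewrite /wt wordM big_cat. Qed.

Lemma wt1 : wt mone = 0%N.
Proof. by rewrite /wt word1 big_nil. Qed.

Lemma homog_eq d d' x : d = d' -> homog d x -> homog d' x.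
Proof. by move=> ->. Qed.

Lemma homog0 d : homog d 0.
Proof. by move=> m; rewrite msupp0 in_fset0. Qed.

Lemma homogD d x y : homog d x -> homog d y -> homog d (x + y).
Proof.
move=> Hx Hy m /(fsubsetP (msuppD_le x y)); rewrite in_fsetU => /orP[].
  exact: Hx.
exact: Hy.
Qed.

Lemma homog_sum (d : nat) (I : eqType) (s : seq I) (F : I -> FA) :
  (forall i, i \in s -> homog d (F i)) -> homog d (\sum_(i <- s) F i).
Proof.
elim: s => [|a s IH] H; first by rewrite big_nil; apply: homog0.
rewrite big_cons; apply: homogD; first by apply: H; rewrite inE eqxx.
by apply: IH => i Hi; apply: H; rewrite inE Hi orbT.
Qed.

Lemma homogM a b x y : homog a x -> homog b y -> homog (a + b) (x * y).
Proof.
move=> Hx Hy m /msuppM_le [k1 [k2 [H1 H2 ->]]].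
by rewrite wtM (Hx _ H1) (Hy _ H2).
Qed.

Lemma homogU c k : homog (wt k) << c *g k >>.
Proof.
by move=> m /(fsubsetP msuppU_le); rewrite in_fset1 => /eqP ->.
Qed.

Lemma homogZ d x c : homog d x -> homog d (x *~ c).
Proof.
move=> Hx m Hm; apply: Hx; move: Hm; apply: contraLR => Hm.
by rewrite -mcoeff_eq0 -scale_int mcoeffZ (mcoeff_outdom Hm) mulr0.
Qed.

Lemma homogMn d x n : homog d x -> homog d (x *+ n).
Proof. by move=> Hx; rewrite pmulrn; apply: homogZ. Qed.

Lemma homog1 : homog 0 (1 : FA).
Proof. by apply: (homog_eq wt1); apply: homogU. Qed.

Lemma homogX i : homog (2 * i.+1) (X i).
Proof.
have H := @homogU 1 (fmu i); rewrite /X; apply: (homog_eq _ H).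
by rewrite /wt fmU big_seq1.
Qed.

Lemma homogG n : homog (2 * n) (G n).
Proof.
elim/ltn_ind: n => n IH.
case: n IH => [|m] IH; first by rewrite G0; exact: homog1.
rewrite GS /hp; apply: homog_sum => k; rewrite mem_index_iota => /andP[_ Hk].
rewrite mulr_natl; apply: homogMn.
have H := homogM (IH k Hk) (@homogX (m - k)%N).
apply: (homog_eq _ H); lia.
Qed.

Lemma homog_ext (k : word) : homog (wt k) (ext' fgen k).
Proof.
case: k => s; rewrite /wt /ext' /=.
elim: s => [|i s IH]; first by rewrite !big_nil; exact: homog1.
rewrite !big_cons; apply: homogM => //; exact: homogG.
Qed.

Lemma homog_f d x : homog d x -> homog d (fmap x).
Proof.
move=> Hx; rewrite fmapE lextE; apply: homog_sum => k Hk.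
by apply: homogZ; rewrite -(Hx k Hk); apply: homog_ext.
Qed.

Lemma wt_pos (k : word) : k != mone -> (0 < wt k)%N.
Proof.
case: k => s; case: s => [|i s] H.
  by case/eqP: H; apply: val_inj; rewrite /= word1.
by rewrite /wt /= big_cons addn_gt0 muln_gt0.
Qed.

Lemma eps_ext (k : word) : eps (ext' fgen k) = (k == mone)%:R.
Proof.
have [-> | Hk] := eqVneq k mone.
  have [-> _] := ext'_mul fgen.
  by rewrite /eps mcoeff1 eqxx.
rewrite /eps mcoeff_outdom //; apply/negP => H.
have := homog_ext H; rewrite wt1 => E.
by have := wt_pos Hk; rewrite -E.
Qed.

Lemma eps_f x : eps (fmap x) = eps x.
Proof.
move: x; apply: ext_eq.
- by move=> x y; have [fA _ _] := rmor_f; rewrite /eps fA mcoeffD.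
- by move=> x y; rewrite /eps mcoeffD.
move=> c k; rewrite fmapE lextU /eps -scale_int mcoeffZ.
rewrite -/(eps (ext' fgen k)) eps_ext mcoeffU.
by case: (k == mone); rewrite ?mulr1 ?mulr0.
Qed.

Theorem mainTheorem11 :
  exists f : FA -> FA,
    [/\ (forall x y, f (x + y) = f x + f y),
        (forall x y, f (x * y) = f x * f y) /\ f 1 = 1,
        bijective f,
        (forall (d : nat) x, homog d x -> homog d (f x)) &
        (forall x, DeltaXi (f x) = tmap f f (DeltaW x)) /\
        (forall x, eps (f x) = eps x)].
Proof.
exists fmap; have [fA fM fO] := rmor_f; split.
- exact: fA.
- by split.
- exact: bij_f.
- exact: homog_f.
- split; [exact: Dcompat | exact: eps_f].
Qed.
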